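(* Let $\mathcal{K}=(\mathcal{R},\mathcal{T})$ be an ME-consistent $\mathcal{ALCP}$ knowledge base over $\mathcal{L}$, $C,D$ concepts and $\kappa\in\mathcal{L}$ a context. There exist two ME-$\mathcal{ALCP}$-models $\mathcal{P},\mathcal{Q}$ of $\mathcal{K}$ with $\mathcal{B}^{s}_{\mathcal{K}}(C\sqsubseteq D\mid\kappa)=\Pr_{\mathcal{P}}(C\sqsubseteq D\mid\kappa)$ and $\mathcal{B}^{c}_{\mathcal{K}}(C\sqsubseteq D\mid\kappa)=\Pr_{\mathcal{Q}}(C\sqsubseteq D\mid\kappa)$.
   Context: $\mathcal{L}$ is a propositional language over a finite set of variables; $\mathrm{Int}(\mathcal{L})$ is the set of truth assignments. A probability distribution over $\mathcal{L}$ is $P:\mathrm{Int}(\mathcal{L})\to[0,1]$ summing to $1$, with $P(\phi)=\sum_{v\models\phi}P(v)$. A probabilistic constraint is $c_0+\sum_{i=1}^k c_i\,\mathsf{p}(\phi_i)\ge 0$ ($c_i\in\mathbb{R}$, $\phi_i\in\mathcal{L}$), satisfied by $P$ iff $c_0+\sum_ic_iP(\phi_i)\ge0$; $\mathrm{Mod}(\mathcal{R})$ is the set of distributions satisfying all constraints in $\mathcal{R}$; for consistent $\mathcal{R}$, $P^{ME}_{\mathcal{R}}$ is the unique maximizer in $\mathrm{Mod}(\mathcal{R})$ of $H(P)=-\sum_vP(v)\log P(v)$. Concepts: $C::=A\mid\neg C\mid C\sqcap C\mid\exists r.C$. An $\mathcal{L}$-GCI is $\langle C\sqsubseteq D:\kappa\rangle$,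 $\kappa\in\mathcal{L}$; an $\mathcal{L}$-TBox is a finite set of them; a KB is $\mathcal{K}=(\mathcal{R},\mathcal{T})$. A possible world $\mathcal{I}=(\Delta^{\mathcal{I}},\cdot^{\mathcal{I}},v^{\mathcal{I}})$ is a classical $\mathcal{ALC}$ interpretation together with $v^{\mathcal{I}}\in\mathrm{Int}(\mathcal{L})$; it models $\langle C\sqsubseteq D:\kappa\rangle$ iff $v^{\mathcal{I}}\not\models\kappa$ or $C^{\mathcal{I}}\subseteq D^{\mathcal{I}}$. An $\mathcal{ALCP}$-interpretation $\mathcal{P}=(\mathfrak{I},P_{\mathfrak{I}})$ is a nonempty finite set of possible worlds with a probability distribution on it; $P^{\mathcal{P}}(v)=\sum_{\mathcal{I}\in\mathfrak{I},v^{\mathcal{I}}=v}P_{\mathfrak{I}}(\mathcal{I})$. $\mathcal{P}$ is an ME-$\mathcal{ALCP}$-model of $\mathcal{K}$ iff all its worlds model every GCI of $\mathcal{T}$ and $P^{\mathcal{P}}=P^{ME}_{\mathcal{R}}$; $\mathrm{Mod}_{ME}(\mathcal{K})$ is the set of these; $\mathcal{K}$ is ME-consistent iff it is nonempty. $\Pr_{\mathcal{P}}(C\sqsubseteq D\mid\kappa)=\big(\sum_{\mathcal{I}\in\mathfrak{I},v^{\mathcal{I}}\models\kappa,C^{\mathcal{I}}\subseteq D^{\mathcal{I}}}P_{\mathfrak{I}}(\mathcal{I})\big)/\big(\sum_{\mathcal{I}\in\mathfrak{I},v^{\mathcal{I}}\models\kappa}P_{\mathfrak{I}}(\mathcal{I})\big)$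 (defined when the denominator is positive). Sceptical degree: $\mathcal{B}^{s}_{\mathcal{K}}(C\sqsubseteq D\mid\kappa)=\inf_{\mathcal{P}\in\mathrm{Mod}_{ME}(\mathcal{K})}\Pr_{\mathcal{P}}(C\sqsubseteq D\mid\kappa)$; credulous degree $\mathcal{B}^{c}_{\mathcal{K}}$: the corresponding supremum. *)

(* Defs.v *)
From HB Require Import structures.
From mathcomp Require Import all_boot all_order all_algebra.
From mathcomp Require Import boolp classical_sets reals exp.
From Stdlib Require List.
Set Implicit Arguments. Unset Strict Implicit. Unset Printing Implicit Defensive.
Import Order.TTheory GRing.Theory Num.Theory.
Local Open Scope ring_scope.
Local Open Scope classical_set_scope.

Inductive pform (V : Type) : Type :=
  | FVar : V -> pform V
  | FTop : pform V
  | FBot : pform V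
  | FNot : pform V -> pform V
  | FAnd : pform V -> pform V -> pform V
  | FOr  : pform V -> pform V -> pform V
  | FImp : pform V -> pform V -> pform V.
Arguments FTop {V}. Arguments FBot {V}.

Definition assign (V : finType) := {ffun V -> bool}.

Fixpoint feval (V : finType) (v : assign V) (phi : pform V) : bool :=
  match phi with
  | FVar x => v x
  | FTop => true
  | FBot => false
  | FNot p => ~~ feval v p
  | FAnd p q => feval v p && feval v q
  | FOr p q => feval v p || feval v q
  | FImp p q => feval v p ==> feval v q
  end.

Section Prob.
Variables (R : realType) (V : finType).

Definition is_dist (P : assign V -> R) : Prop :=
  (forall v, 0 <= P v) /\ \sum_(v : assign V) P v = 1.

Definition fprob (P : assign V -> R) (phi : pform V) : R :=
  \sum_(v : assign V | feval v phi) P v.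

Record pconstr := PConstr { pc0 : R; pcterms : seq (R * pform V) }.

Definition psat (P : assign V -> R) (c : pconstr) : Prop :=
  0 <= pc0 c + \sum_(t <- pcterms c) t.1 * fprob P t.2.

Definition in_Mod (Rs : seq pconstr) (P : assign V -> R) : Prop :=
  is_dist P /\ forall c, List.In c Rs -> psat P c.

Definition entropy (P : assign V -> R) : R :=
  - \sum_(v : assign V) (if P v == 0 then 0 else P v * ln (P v)).

Definition is_ME (Rs : seq pconstr) (P : assign V -> R) : Prop :=
  in_Mod Rs P /\ forall Q, in_Mod Rs Q -> entropy Q <= entropy P.
End Prob.

Inductive concept (CN RN : Type) : Type :=
  | CAtom : CN -> concept CN RN
  | CNeg : concept CN RN -> concept CN RN
  | CConj : concept CN RN -> concept CN RN -> concept CN RN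
  | CEx : RN -> concept CN RN -> concept CN RN.

Record gci (V : finType) (CN RN : Type) :=
  GCI { glhs : concept CN RN; grhs : concept CN RN; gctx : pform V }.

Record KB (R : realType) (V : finType) (CN RN : Type) :=
  MkKB { kbR : seq (pconstr R V); kbT : seq (gci V CN RN) }.

Record world (V : finType) (CN RN : Type) := World {
  wdom : Type;
  wdom_ne : inhabited wdom;
  wconc : CN -> set wdom;
  wrole : RN -> wdom -> wdom -> Prop;
  wval : assign V }.
Arguments wconc {V CN RN} w _ _.
Arguments wrole {V CN RN} w _ _ _.

Section ConceptSem.
Variables (V : finType) (CN RN : Type) (I : world V CN RN).
Fixpoint cinterp (C : concept CN RN) : set (wdom I) :=
  match C with
  | CAtom A => wconc I A
  | CNeg C1 => ~` cinterp C1
  | CConj C1 C2 => cinterp C1 `&` cinterp C2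
  | CEx r C1 => [set x | exists y, wrole I r x y /\ cinterp C1 y]
  end.
End ConceptSem.
Arguments cinterp {V CN RN} I C _.

Definition csub (V : finType) (CN RN : Type) (I : world V CN RN)
    (C D : concept CN RN) : Prop := cinterp I C `<=` cinterp I D.

Definition models_gci (V : finType) (CN RN : Type) (I : world V CN RN)
    (g : gci V CN RN) : Prop :=
  ~~ feval (wval I) (gctx g) \/ csub I (glhs g) (grhs g).

(* ALCP-interpretation: a nonempty finite set of (pairwise distinct) possible
   worlds, given as an injectively indexed family, with a probability
   distribution on it *)
Record ALCPinterp (R : realType) (V : finType) (CN RN : Type) := ALCPInterp {
  pidx : finType;
  pworld : pidx -> world V CN RN;
  pworld_inj : injective pworld;
  pprob : pidx -> R;
  pprob_ge0 : forall i, 0 <= pprob i;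
  pprob_sum1 : \sum_(i : pidx) pprob i = 1 }.
Arguments pidx {R V CN RN} a.
Arguments pworld {R V CN RN} a _.
Arguments pprob {R V CN RN} a _.

Section Sem.
Variables (R : realType) (V : finType) (CN RN : Type).
Implicit Types (P : ALCPinterp R V CN RN) (K : KB R V CN RN).

Definition marg P (v : assign V) : R :=
  \sum_(i : pidx P | wval (pworld P i) == v) pprob P i.

Definition ME_model K P : Prop :=
  (forall (i : pidx P) g, List.In g (kbT K) -> models_gci (pworld P i) g) /\ is_ME (kbR K) (marg P).

Definition ME_consistent K : Prop := exists P, ME_model K P.

(* Pr_P(C ⊑ D | kappa); division by 0 yields 0 (MathComp convention) *)
Definition PrCond P (C D : concept CN RN) (kappa : pform V) : R :=
  (\sum_(i : pidx P | feval (wval (pworld P i)) kappa && `[< csub (pworld P i) C D >])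
      pprob P i)
  / (\sum_(i : pidx P | feval (wval (pworld P i)) kappa) pprob P i).

Definition deg_values K (C D : concept CN RN) (kappa : pform V) : set R :=
  [set r | exists P, ME_model K P /\ r = PrCond P C D kappa].

Definition Bs K C D kappa : R := inf (deg_values K C D kappa).
Definition Bc K C D kappa : R := sup (deg_values K C D kappa).
End Sem.

(* Main.v *)
Require Import Defs.
From mathcomp Require Import all_boot all_order all_algebra.
From mathcomp Require Import boolp classical_sets reals exp.
From mathcomp Require Import lra.
Set Implicit Arguments. Unset Strict Implicit. Unset Printing Implicit Defensive.
Import Order.TTheory GRing.Theory Num.Theory.
Local Open Scope ring_scope.

Section Uniq.
Variables (R : realType) (V : finType).

Definition phi (x : R) : R := if x == 0 then 0 else x * ln x.

Lemma ln_lt_sub1 (z : R) : 0 < z -> z != 1 -> ln z < z - 1.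
Proof.
move=> z0 z1. have h : ln z != 0 by rewrite ln_eq0.
have := expR_gt1Dx h; rewrite lnK ?posrE //; lra.
Qed.

Lemma tangent_lt (x y : R) : 0 < x -> 0 <= y -> y != x ->
  y * ln x + y - x < phi y.
Proof.
move=> x0 y0 yx; rewrite /phi; have [->|yn0] := eqVneq y 0.
  by rewrite mul0r add0r sub0r oppr_lt0.
have yp : 0 < y by rewrite lt_def yn0 y0.
have hz : 0 < x / y by rewrite divr_gt0.
have hz1 : x / y != 1.
  apply/eqP => h; move: yx; have -> : x = y by rewrite -[x](divfK yn0) h mul1r.
  by rewrite eqxx.
have := ln_lt_sub1 hz hz1; rewrite ln_div ?posrE // => h.
move: h; rewrite -(ltr_pM2l yp).
rewrite mulrBr mulrBr mulr1 [y * (x / y)]mulrC -mulrA mulVf ?mulr1 //.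
lra.
Qed.

Lemma tangent_eq (x : R) : 0 < x -> phi x = x * ln x + x - x.
Proof. by move=> x0; rewrite /phi gt_eqF // addrK. Qed.

Lemma phi_mid (a b : R) : 0 <= a -> 0 <= b ->
  2 * phi ((a + b) / 2) <= phi a + phi b /\
  (phi a + phi b = 2 * phi ((a + b) / 2) -> a = b).
Proof.
move=> a0 b0; set m := (a + b) / 2.
have [m0|mp] := leP m 0.
  have ha : a = 0 by rewrite /m in m0; lra.
  have hb : b = 0 by rewrite /m in m0; lra.
  have m00 : m = 0 by rewrite /m ha hb; lra.
  rewrite m00 ha hb /phi eqxx; split => //; lra.
have hm : 2 * phi m = (a * ln m + a - m) + (b * ln m + b - m).
  rewrite tangent_eq // /m; lra.
have key : forall y, 0 <= y -> y * ln m + y - m <= phi y /\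
   (y != m -> y * ln m + y - m < phi y).
  move=> y y0; split; last exact: tangent_lt.
  have [->|ym] := eqVneq y m; first by rewrite tangent_eq.
  exact/ltW/tangent_lt.
have [ka ka'] := key a a0; have [kb kb'] := key b b0.
rewrite hm; split; first lra.
move=> h; have [am|am] := eqVneq a m.
  rewrite /m in am; lra.
have := ka' am; lra.
Qed.

Lemma fprob_mid (P Q : assign V -> R) f :
  fprob (fun v => (P v + Q v) / 2) f = (fprob P f + fprob Q f) / 2.
Proof. by rewrite /fprob -big_split /= mulr_suml. Qed.

Lemma ME_unique (Rs : seq (pconstr R V)) (P Q : assign V -> R) :
  is_ME Rs P -> is_ME Rs Q -> forall v, P v = Q v.
Proof.
move=> [[[P0 P1] PR] PM] [[[Q0 Q1] QR] QM].
set M := fun v => (P v + Q v) / 2.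
have MM : in_Mod Rs M.
  split; first split.
  - by move=> v; rewrite /M divr_ge0 ?addr_ge0.
  - by rewrite /M -mulr_suml big_split /= P1 Q1; lra.
  move=> c cin; have := PR c cin; have := QR c cin; rewrite /psat.
  have fm : forall f, fprob M f = (fprob P f + fprob Q f)/2 by move=> f; rewrite /fprob /M -big_split /= mulr_suml.
  move=> hQ hP; under eq_bigr => t _ do rewrite fm.
  have -> : \sum_(t <- pcterms c) t.1 * ((fprob P t.2 + fprob Q t.2) / 2) =
    ((\sum_(t <- pcterms c) t.1 * fprob P t.2) + \sum_(t <- pcterms c) t.1 * fprob Q t.2) / 2.
    by rewrite -big_split mulr_suml; apply: eq_bigr => t _ /=; lra.
  lra.
have e1 := PM _ (conj (conj Q0 Q1) QR).
have e2 := QM _ (conj (conj P0 P1) PR).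
have e3 := PM _ MM.
have eP : entropy P = - \sum_v phi (P v) by [].
have eQ : entropy Q = - \sum_v phi (Q v) by [].
have eM : entropy M = - \sum_v phi (M v) by [].
have hle : forall v, 2 * phi (M v) <= phi (P v) + phi (Q v).
  by move=> v; have [] := phi_mid (P0 v) (Q0 v).
have hge : 0 <= \sum_v (phi (P v) + phi (Q v) - 2 * phi (M v)).
  by apply: sumr_ge0 => v _; have := hle v; lra.
have hs : \sum_v (phi (P v) + phi (Q v) - 2 * phi (M v)) = 0.
  apply/eqP; rewrite eq_le hge andbT; move: hge.
  rewrite sumrB big_split /= -mulr_sumr.
  rewrite eP eQ eM in e1 e2 e3. lra.
move=> v.
have h0 := @psumr_eq0P _ _ xpredT (fun v => phi (P v) + phi (Q v) - 2 * phi (M v)).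
have := h0 (fun v _ => (ltac:(have := hle v; lra))) hs v isT.
have [_ ] := phi_mid (P0 v) (Q0 v); rewrite /M => hh he; apply: hh; lra.
Qed.

End Uniq.

Section Main.
Variables (R : realType) (V : finType) (CN RN : Type)
  (K : KB R V CN RN) (C D : concept CN RN) (kappa : pform V).

Definition modelsT (w : world V CN RN) : Prop :=
  forall g, List.In g (kbT K) -> models_gci w g.

Lemma sum_marg (P : ALCPinterp R V CN RN) (Qp : pred (assign V)) :
  \sum_(i | Qp (wval (pworld P i))) pprob P i = \sum_(v | Qp v) marg P v.
Proof.
rewrite (partition_big (fun i => wval (pworld P i)) Qp) //=.
apply: eq_bigr => v Qv; rewrite /marg; apply: eq_bigl => i.
by case: eqP => [->|_]; rewrite ?Qv ?andbF.
Qed.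

Definition Ex (b : bool) (v : assign V) : bool :=
  `[< exists w, modelsT w /\ wval w = v /\ `[< csub w C D >] = b >].
Definition ch (b : bool) (v : assign V) : bool := if Ex b v then b else ~~ b.

Definition numer (P : ALCPinterp R V CN RN) :=
  \sum_(i : pidx P | feval (wval (pworld P i)) kappa &&
        `[< csub (pworld P i) C D >]) pprob P i.

Lemma numer_bounds (P : ALCPinterp R V CN RN) :
  (forall i : pidx P, modelsT (pworld P i)) ->
  \sum_(i | feval (wval (pworld P i)) kappa && ch false (wval (pworld P i))) pprob P i
  <= numer P <=
  \sum_(i | feval (wval (pworld P i)) kappa && ch true (wval (pworld P i))) pprob P i.
Proof.
move=> hT; rewrite /numer; apply/andP; split; rewrite [X in X <= _]big_mkcond
  [X in _ <= X]big_mkcond /=; apply: ler_sum => i _;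
  case: (feval _ _) => //=; rewrite /ch.
- case: (boolP (Ex false _)) => [_|hE]; first by case: ifP => // _; apply: pprob_ge0.
  have -> // : `[< csub (pworld P i) C D >] = true.
  apply: contraNT hE => hc; apply/asboolP; exists (pworld P i); split => //.
  by split => //; apply/negbTE.
- case: (boolP (Ex true _)) => [_|hE]; first by case: ifP => // _; apply: pprob_ge0.
  have -> // : `[< csub (pworld P i) C D >] = false.
  apply: contraNF hE => hc; apply/asboolP; exists (pworld P i); split => //.
Qed.

Definition TsatP : {pred assign V} :=
  fun v => `[< exists w, modelsT w /\ wval w = v >].

Lemma sum_sub (F : assign V -> R) (Qp : pred (assign V)) :
  (forall v, F v != 0 -> TsatP v) ->
  \sum_(i : {x in TsatP} | Qp (val i)) F (val i) = \sum_(v | Qp v) F v.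
Proof.
move=> hF; rewrite -big_sub_cond [RHS](bigID TsatP) /=.
rewrite [X in _ = _ + X]big1 ?addr0; last first.
  by move=> v /andP[_ hv]; apply/eqP; apply: contraNT hv => /hF.
by apply: eq_bigl => v; rewrite andbC.
Qed.

Lemma ex_good b (i : {x in TsatP}) :
  exists w, modelsT w /\ wval w = val i /\ (Ex b (val i) -> `[< csub w C D >] = b).
Proof.
case: (boolP (Ex b (val i))) => [/asboolP [w [h1 [h2 h3]]]|hE].
  by exists w.
have := valP i; rewrite /TsatP => /asboolP [w [h1 h2]].
by exists w.
Qed.

Definition wsel b (i : {x in TsatP}) : world V CN RN := proj1_sig (cid (ex_good b i)).

Lemma wsel_T b i : modelsT (wsel b i).
Proof. by rewrite /wsel; case: cid => w [? ?]. Qed.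
Lemma wsel_val b i : wval (wsel b i) = val i.
Proof. by rewrite /wsel; case: cid => w [? []]. Qed.
Lemma wsel_csub b i : `[< csub (wsel b i) C D >] = ch b (val i).
Proof.
rewrite /wsel /ch; case: cid => w [h1 [h2 h3]] /=.
case: (boolP (Ex b (val i))) => [/h3 //|hE].
have hc : `[< csub w C D >] != b.
  by apply: contraNN hE => /eqP hc; apply/asboolP; exists w.
by case: b hc {h3 hE}; case: (`[< csub w C D >]).
Qed.

Lemma wsel_inj b : injective (wsel b).
Proof. by move=> i j h; apply: val_inj; rewrite -!(wsel_val b) h. Qed.

Variables (m : assign V -> R) (m0 : forall v, 0 <= m v) (m1 : \sum_v m v = 1)
  (msupp : forall v, m v != 0 -> TsatP v).

Lemma build_ge0 (i : {x in TsatP}) : 0 <= m (val i).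
Proof. exact: m0. Qed.
Lemma build_sum1 : \sum_(i : {x in TsatP}) m (val i) = 1.
Proof. by rewrite -m1 -(sum_sub xpredT msupp). Qed.

Definition build b : ALCPinterp R V CN RN :=
  @ALCPInterp R V CN RN {x in TsatP} (wsel b) (@wsel_inj b) (fun i => m (val i))
    build_ge0 build_sum1.

Lemma build_marg b v : marg (build b) v = m v.
Proof.
rewrite /marg /=.
under eq_bigl do rewrite wsel_val.
by rewrite (sum_sub (pred1 v) msupp) big_pred1_eq.
Qed.

Lemma build_numer b : numer (build b) =
  \sum_(v | feval v kappa && ch b v) m v.
Proof.
rewrite /numer /=.
under eq_bigl do rewrite wsel_csub wsel_val.
exact: (sum_sub (fun v => feval v kappa && ch b v) msupp).
Qed.
End Main.

Lemma inf_min (R : realType) (E : set R) x : E x -> (forall y, E y -> x <= y) -> inf E = x.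
Proof.
move=> Ex hx; apply/eqP; rewrite eq_le; apply/andP; split.
  by apply: ge_inf => //; exists x.
by apply: lb_le_inf; [exists x|].
Qed.

Lemma sup_max (R : realType) (E : set R) x : E x -> (forall y, E y -> y <= x) -> sup E = x.
Proof.
move=> Ex hx; apply/eqP; rewrite eq_le; apply/andP; split.
  by apply: ge_sup => //; exists x.
by apply: ub_le_sup => //; exists x.
Qed.

Theorem corollary1 (R : realType) (V : finType) (CN RN : Type)
  (K : KB R V CN RN) (C D : concept CN RN) (kappa : pform V) :
  ME_consistent K ->
  exists P Q : ALCPinterp R V CN RN,
    ME_model K P /\ ME_model K Q /\
    Bs K C D kappa = PrCond P C D kappa /\
    Bc K C D kappa = PrCond Q C D kappa.
Proof.
move=> [P0 [hT0 hME0]].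
set m := marg P0.
have m0 : forall v, 0 <= m v by move=> v; apply: sumr_ge0 => i _; apply: pprob_ge0.
have m1 : \sum_v m v = 1 by case: hME0 => [[[_ ->]]].
have msupp : forall v, m v != 0 -> TsatP K v.
  move=> v; apply: contraNT => hn; apply/eqP; rewrite /m /marg big_pred0 // => i.
  apply/negbTE/eqP => hi; move/negP: hn; apply; apply/asboolP.
  by exists (pworld P0 i); split => // g; apply: hT0.
have MEb : forall b, ME_model K (build C D m0 m1 msupp b).
  move=> b; split; first by move=> i g; apply: wsel_T.
  have -> : marg (build C D m0 m1 msupp b) = marg P0.
    by apply/funext => v; rewrite build_marg.
  exact: hME0.
have uniq : forall P, ME_model K P -> forall v, marg P v = m v.
  by move=> P [_ hP] v; apply: (ME_unique hP hME0).
set d := \sum_(v | feval v kappa) m v.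
have den : forall P, ME_model K P ->
    \sum_(i : pidx P | feval (wval (pworld P i)) kappa) pprob P i = d.
  move=> P hP; rewrite (sum_marg P (fun v => feval v kappa)).
  by apply: eq_bigr => v _; rewrite uniq.
have sumch : forall P b, ME_model K P ->
    \sum_(i | feval (wval (pworld P i)) kappa && ch K C D b (wval (pworld P i))) pprob P i
    = \sum_(v | feval v kappa && ch K C D b v) m v.
  move=> P b hP; rewrite (sum_marg P (fun v => feval v kappa && ch K C D b v)).
  by apply: eq_bigr => v _; rewrite uniq.
have PrE : forall P, ME_model K P -> PrCond P C D kappa = numer C D kappa P / d.
  by move=> P hP; rewrite /PrCond den.
have bnd : forall P, ME_model K P ->
  (\sum_(v | feval v kappa && ch K C D false v) m v) / d <= PrCond P C D kappa <=
  (\sum_(v | feval v kappa && ch K C D true v) m v) / d.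
  move=> P hP; rewrite PrE // -(sumch P false) // -(sumch P true) //.
  have [hl hu] := andP (numer_bounds (K:=K) C D kappa (fun i g hg => proj1 hP i g hg)).
  have d0 : 0 <= d^-1 by rewrite invr_ge0 sumr_ge0.
  by rewrite !ler_wpM2r.
have val : forall b, PrCond (build C D m0 m1 msupp b) C D kappa =
   (\sum_(v | feval v kappa && ch K C D b v) m v) / d.
  by move=> b; rewrite PrE // build_numer.
exists (build C D m0 m1 msupp false), (build C D m0 m1 msupp true).
split; first exact: MEb. split; first exact: MEb.
split.
- rewrite val; apply: inf_min; first by exists (build C D m0 m1 msupp false); rewrite val.
  by move=> y [P [hP ->]]; case/andP: (bnd P hP).
- rewrite val; apply: sup_max; first by exists (build C D m0 m1 msupp true); rewrite val.
  by move=> y [P [hP ->]]; case/andP: (bnd P hP).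
Qed.
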